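(* Let $p(x,y)$ be a real polynomial with $p(0,0)=0$, $\nabla p(0,0)=(0,0)$, $\dim\operatorname{Co}N_p=2$, such that for every $A\in\mathbb{N}^2$ the main $A$-quasi-homogeneous form of $p$ is nonnegative on $\mathbb{R}^2$. Let $A=(A_1,A_2)\in\mathcal{A}_p$, let $x^{\chi_1}y^{\eta_1}$ be the monomial of the main term of $\varphi_2^A$, and suppose that for every $u_0\in U_p(A)$ one has $g_2^A(u_0)\neq0$ and the system $x\neq0$, $y\neq0$, $x^{-A_2}y^{A_1}=u_0$, $x^{\chi_1}y^{\eta_1}g_2^A(u_0)<0$ has no real solution. Then for all $(x,y)$ with $\varphi_1^A(x,y)=0$, $x\neq0$, $y\neq0$ one has $\varphi_2^A(x,y)>0$.
   Context: $\mathbb{N}=\{1,2,\dots\}$; $\mathbb{N}_0^2$ is the set of $(A_1,A_2)\in\mathbb{N}^2$ with $\gcd(A_1,A_2)=1$. $N_p$ is the support of $p$ and $\operatorname{Co}N_p$ its convex hull. For $A\in\mathbb{N}^2$ the main $A$-quasi-homogeneous form of $p$ is the sum of the terms of $p$ whose exponent vectors $k$ minimize $\langle A,k\rangle$ over $N_p$. For $A\in\mathbb{N}_0^2$, with $B_1^A<B_2^A<\dots$ the distinct values of $\langle A,k\rangle$ on $N_p$, $\varphi_i^A$ is the sum of terms of $p$ with $\langle A,k\rangle=B_i^A$. For such a form $\sum_i c_ix^{\gamma_i}y^{\delta_i}$ ($c_i\ne0$, $\gamma_1>\gamma_2>\dots$), its main term is $c_1x^{\gamma_1}y^{\delta_1}$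 and its characteristic polynomial is $\sum_ic_iu^{(\gamma_1-\gamma_i)/A_2}$; $g_1^A,g_2^A$ are those of $\varphi_1^A,\varphi_2^A$. $\mathcal{A}_p$ is the set of $A\in\mathbb{N}_0^2$ such that $\varphi_1^A$ has at least three terms, $g_1^A\ge0$ on $\mathbb{R}$, and $g_1^A$ has a real root; $U_p(A)$ is the set of real roots of $g_1^A$. *)

(* Defs.v *)
(* A real polynomial p(x,y) is represented as an element of
   {poly {poly R}}: p = \sum_i (p`_i).[y] * x^i, so the coefficient of
   x^i y^j is (p`_i)`_j.  R is an arbitrary realType (a model of the reals). *)
From HB Require Import structures.
From mathcomp Require Import all_boot all_order all_algebra.
From mathcomp Require Import reals.
Set Implicit Arguments. Unset Strict Implicit. Unset Printing Implicit Defensive.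
Import Order.TTheory GRing.Theory Num.Theory.
Local Open Scope ring_scope.

Section Defs.
Variable R : realType.
Implicit Types (p : {poly {poly R}}) (A k : nat * nat).

Definition pcoef p k : R := (p`_k.1)`_k.2.

Definition peval p (x y : R) : R := (map_poly (fun q : {poly R} => q.[y]) p).[x].

Definition supp p : seq (nat * nat) :=
  [seq k <- [seq (i, j) | i <- iota 0 (size p), j <- iota 0 (size p`_i)]
     | pcoef p k != 0].

(* dim Co N_p = 2 : N_p contains three affinely independent points *)
Definition hull_dim2 p : Prop :=
  exists k1 k2 k3, [/\ k1 \in supp p, k2 \in supp p, k3 \in supp p &
    ((k2.1%:Z - k1.1%:Z) * (k3.2%:Z - k1.2%:Z)
      - (k2.2%:Z - k1.2%:Z) * (k3.1%:Z - k1.1%:Z) != 0)%R].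

Definition wdeg A k : nat := (A.1 * k.1 + A.2 * k.2)%N.

Definition levels p A : seq nat := sort leq (undup [seq wdeg A k | k <- supp p]).

Definition lev p A (i : nat) : nat := nth 0%N (levels p A) i.-1.

Definition lev_supp p A i : seq (nat * nat) :=
  [seq k <- supp p | wdeg A k == lev p A i].

Definition phi p A i (x y : R) : R :=
  \sum_(k <- lev_supp p A i) pcoef p k * x ^+ k.1 * y ^+ k.2.

Definition main_form p A (x y : R) : R :=
  \sum_(k <- supp p | all (fun l => wdeg A k <= wdeg A l)%N (supp p))
     pcoef p k * x ^+ k.1 * y ^+ k.2.

(* exponent (chi, eta) of the main term of phi_i^A: the term with the largest
   power of x (unique in a quasi-homogeneous form) *)
Definition main_xexp p A i : nat := \max_(k <- lev_supp p A i) k.1.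
Definition main_yexp p A i : nat :=
  \max_(k <- lev_supp p A i | k.1 == main_xexp p A i) k.2.

Definition charpoly p A i : {poly R} :=
  \sum_(k <- lev_supp p A i)
     pcoef p k *: 'X^((main_xexp p A i - k.1) %/ A.2).

Definition inN02 A : bool := [&& 0 < A.1, 0 < A.2 & coprime A.1 A.2]%N.

Definition inAp p A : Prop :=
  [/\ inN02 A, (3 <= size (lev_supp p A 1))%N,
      (forall u : R, 0 <= (charpoly p A 1).[u])
    & exists u : R, root (charpoly p A 1) u].

Definition Up p A (u : R) : bool := root (charpoly p A 1) u.

End Defs.

(* Main.v *)
Require Import Defs.
From HB Require Import structures.
From mathcomp Require Import all_boot all_order all_algebra.
From mathcomp Require Import reals.
From mathcomp Require Import zify ring lra.
Import Order.TTheory GRing.Theory Num.Theory.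
Local Open Scope ring_scope.

Lemma argmax_seq (s : seq (nat * nat)) : s != [::] ->
  exists2 k0, k0 \in s & (\max_(k <- s) k.1)%N = k0.1.
Proof.
elim: s => // a t IH _; rewrite big_cons.
case: t IH => [|b t] IH.
  by exists a; rewrite ?inE ?eqxx // big_nil maxn0.
have [k0 k0in ->] := IH isT.
case: (leqP a.1 k0.1) => h.
  exists k0 => //.
  by rewrite in_cons k0in orbT.
exists a => //.
by rewrite in_cons eqxx.
Qed.

Lemma arith (a1 a2 m n0 k1 k2 b : nat) : (0 < a2)%N -> (k1 <= m)%N ->
  (a1 * m + a2 * n0 = b)%N -> (a1 * k1 + a2 * k2 = b)%N ->
  (n0 <= k2)%N /\ (a1 * (m - k1) = a2 * (k2 - n0))%N.
Proof. move=> ha hk E1 E2; split; nia. Qed.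

Lemma key (R : realType) (A : nat*nat) (s : seq (nat*nat)) (c : nat*nat -> R)
  (B : nat) (x y : R) :
  (0 < A.2)%N -> coprime A.1 A.2 -> (forall k, k \in s -> wdeg A k = B) -> x != 0 ->
  \sum_(k <- s) c k * x ^+ k.1 * y ^+ k.2 =
  x ^+ (\max_(k <- s) k.1) * y ^+ (\max_(k <- s | k.1 == \max_(k <- s) k.1) k.2) *
  (\sum_(k <- s) c k *: 'X^((\max_(k <- s) k.1 - k.1) %/ A.2)).[x ^- A.2 * y ^+ A.1].
Proof.
move=> A2p cop hw x0.
have [->|sn] := eqVneq s [::]; first by rewrite !big_nil horner0 mulr0.
set M := (\max_(k <- s) k.1)%N.
have [k0 k0in k0M] := argmax_seq s sn.
rewrite -/M in k0M.
set N := (\max_(k <- s | k.1 == M) k.2)%N.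
have hN : N = k0.2.
  apply/eqP; rewrite eqn_leq; apply/andP; split.
    apply/bigmax_leqP_seq => k ks /eqP kM.
    have := hw k ks; have := hw k0 k0in; rewrite /wdeg => e1 e2.
    have kk : k.1 = k0.1 by rewrite kM k0M.
    have : (A.2 * k.2 = A.2 * k0.2)%N by rewrite kk in e2; apply/(@addnI (A.1 * k0.1)); rewrite e1 e2.
    by move/eqP; rewrite eqn_mul2l gtn_eqF //= => /eqP ->.
  by apply: (leq_bigmax_seq k0) => //=; rewrite k0M.
rewrite horner_sum big_distrr /=; apply: eq_big_seq => k ks.
have kle : (k.1 <= M)%N by apply: (leq_bigmax_seq k).
have [hh e] : (k0.2 <= k.2)%N /\ (A.1 * (M - k.1) = A.2 * (k.2 - k0.2))%N.
  have := hw k ks; have := hw k0 k0in; rewrite /wdeg -k0M.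
  exact: arith.
rewrite -hN in e hh.
have dv : (A.2 %| M - k.1)%N.
  by rewrite -(@Gauss_dvdr _ A.1) ?e ?dvdn_mulr // coprime_sym.
move: (dv) => /dvdnP [q hq].
rewrite hq mulnK //.
have hk2 : k.2 = (N + A.1 * q)%N.
  have : (A.2 * (k.2 - N) = A.2 * (A.1 * q))%N by rewrite -e hq mulnA mulnC.
  move/eqP; rewrite eqn_mul2l gtn_eqF //= => /eqP.
  by move=> E; rewrite -E subnKC.
have hk1 : M = (k.1 + A.2 * q)%N by rewrite mulnC -hq subnKC.
rewrite hornerZ hornerXn hk2 hk1 exprMn -!exprM !exprD exprVn.
rewrite !exprM.
have hx : (x ^+ A.2) ^+ q != 0 by rewrite !expf_neq0.
by field.
Qed.

Theorem mainTheorem8 (R : realType) (p : {poly {poly R}}) (A : nat * nat) :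
  peval p 0 0 = 0 ->
  peval (p^`()) 0 0 = 0 ->
  peval (map_poly (fun q : {poly R} => q^`()) p) 0 0 = 0 ->
  hull_dim2 p ->
  (forall A' : nat * nat, (0 < A'.1)%N -> (0 < A'.2)%N ->
     forall x y : R, 0 <= main_form p A' x y) ->
  inAp p A ->
  (forall u0 : R, Up p A u0 ->
     (charpoly p A 2).[u0] != 0 /\
     ~ (exists x y : R, [/\ x != 0, y != 0, x ^- A.2 * y ^+ A.1 = u0 &
          x ^+ main_xexp p A 2 * y ^+ main_yexp p A 2 * (charpoly p A 2).[u0] < 0])) ->
  forall x y : R, phi p A 1 x y = 0 -> x != 0 -> y != 0 -> 0 < phi p A 2 x y.
Proof.
move=> _ _ _ _ _ [hA _ _ _] hU x y h1 x0 y0.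
move: hA => /and3P [_ A2p cop].
have E i : phi p A i x y = x ^+ main_xexp p A i * y ^+ main_yexp p A i *
    (charpoly p A i).[x ^- A.2 * y ^+ A.1].
  rewrite /phi /charpoly /main_yexp /main_xexp.
  apply: (@key R A _ (pcoef p) (lev p A i)) => // k.
  by rewrite /lev_supp mem_filter => /andP [/eqP].
have hu : Up p A (x ^- A.2 * y ^+ A.1).
  rewrite /Up /root; move: h1; rewrite E => /eqP.
  by rewrite !mulf_eq0 !expf_eq0 (negPf x0) (negPf y0) !andbF.
have [g2 hn] := hU _ hu.
rewrite E lt_def mulf_neq0 ?expf_neq0 //=.
rewrite leNgt; apply/negP => hlt; apply: hn.
  by exists x, y; split.
by rewrite mulf_neq0 ?expf_neq0.
Qed.
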